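(* Let $G$ be a finite simple graph of order $n$ whose adjacency matrix $A(G)$ is non-singular, and suppose $\bar d\le n-2\ln n-3$. Then $\mathcal{E}(G)\geq n-1+\bar{d}$, unless $G$ is isomorphic to the path $P_4$ or to the paw $H$.
   Context: For a finite simple graph $G$ with $n$ vertices and $m$ edges, $A(G)$ is its adjacency matrix with eigenvalues $\lambda_1\ge\cdots\ge\lambda_n$, and the energy is $\mathcal{E}(G)=\sum_{i=1}^n|\lambda_i|$. $G$ is non-singular if $A(G)$ is non-singular. $\bar d=2m/n$ is the average degree; $\ln$ is the natural logarithm. $P_4$ is the path on 4 vertices, and the paw $H$ is the graph on 4 vertices consisting of a triangle together with one extra vertex adjacent to exactly one vertex of the triangle. *)

(* Defs.v *)
From mathcomp Require Import all_boot all_order all_algebra.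
From mathcomp Require Import all_classical all_reals all_analysis.
Set Implicit Arguments. Unset Strict Implicit. Unset Printing Implicit Defensive.
Import Order.TTheory GRing.Theory Num.Theory.
Local Open Scope ring_scope.

Definition simple_graph (n : nat) (e : rel 'I_n) : Prop :=
  symmetric e /\ irreflexive e.

Definition adjmx (R : nzRingType) (n : nat) (e : rel 'I_n) : 'M[R]_n :=
  \matrix_(i, j) (e i j)%:R.

Definition nedges (n : nat) (e : rel 'I_n) : nat :=
  #|[set p : 'I_n * 'I_n | e p.1 p.2 && (p.1 < p.2)%N]|.

Definition avg_deg (R : realType) (n : nat) (e : rel 'I_n) : R :=
  (2 * nedges e)%:R / n%:R.

(* lam is the list of eigenvalues (with multiplicity) of the square matrix A,
   i.e. char_poly A = prod_i (X - lam_i). *)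
Definition is_spectrum (R : realType) (n : nat) (A : 'M[R]_n) (lam : 'I_n -> R) : Prop :=
  char_poly A = \prod_(i < n) ('X - (lam i)%:P).

Definition energy_of (R : realType) (n : nat) (lam : 'I_n -> R) : R :=
  \sum_(i < n) `|lam i|.

Definition graph_iso (n k : nat) (e : rel 'I_n) (e' : rel 'I_k) : Prop :=
  exists f : 'I_n -> 'I_k, bijective f /\ forall i j, e i j = e' (f i) (f j).

Definition P4 : rel 'I_4 :=
  fun i j => ((i : nat) == j.+1) || ((j : nat) == i.+1).

Definition paw_edge (a b : nat) : bool :=
  [|| (a == 0) && (b == 1), (a == 0) && (b == 2), (a == 1) && (b == 2)
    | (a == 2) && (b == 3)]%N.
Definition paw : rel 'I_4 :=
  fun i j => paw_edge i j || paw_edge j i.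

(* Main.v *)
Require Import Defs.
From mathcomp Require Import all_boot all_order all_algebra.
From mathcomp Require Import all_classical all_reals all_analysis.
From mathcomp Require Import ring lra.
Import Order.TTheory GRing.Theory Num.Theory.
Local Open Scope ring_scope.

Section RealPart.
Variable R : realType.

Lemma ln_le_sub1 {y : R} : 0 < y -> ln y <= y - 1.
Proof.
move=> y0; have := @le_ln1Dx R (y - 1).
have -> : 1 + (y - 1) = y by lra.
by apply; lra.
Qed.

Lemma ln_ge_1subinv {y : R} : 0 < y -> 1 - y^-1 <= ln y.
Proof.
move=> y0; have yi0 : 0 < y^-1 by rewrite invr_gt0.
have := ln_le_sub1 yi0; rewrite lnV ?posrE //; lra.
Qed.

Lemma phi_mono (a b : R) : 2 <= a -> a <= b -> a - 2 * ln a <= b - 2 * ln b.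
Proof.
move=> a2 ab.
have a0 : 0 < a by lra.
have b0 : 0 < b by lra.
have h := ln_le_sub1 (divr_gt0 b0 a0).
rewrite ln_div ?posrE // in h.
have aw : a * a^-1 = 1 by rewrite mulfV //; lra.
have w0 : 0 < a^-1 by rewrite invr_gt0.
set w := a^-1 in h aw w0 *.
have h2 : 0 <= (b - a) * (1 - 2 * w) by apply: mulr_ge0; nra.
nra.
Qed.

Lemma n_ge6 (n : nat) : 4 < n%:R - 2 * ln (n%:R : R) -> (6 <= n)%N.
Proof.
move=> h; rewrite leqNgt; apply/negP => hn.
case: n hn h => [|n] hn h.
  by rewrite ln0 // in h; lra.
have N1 : (1 : R) <= n.+1%:R by rewrite ler1n.
have N5 : (n.+1%:R : R) <= 5%:R by rewrite ler_nat.
set N := (n.+1%:R : R) in N1 N5 h.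
have N0 : 0 < N by lra.
have := ln_ge_1subinv N0.
set w := N^-1.
have Nw : N * w = 1 by rewrite /w mulfV //; lra.
have w0 : 0 < w by rewrite /w invr_gt0.
nra.
Qed.


Lemma sqrt_ln {x : R} : 0 < x ->
  let s := Num.sqrt x in 0 < s /\ s ^+ 2 = x /\ ln x = 2 * ln s.
Proof.
move=> x0 s; have s0 : 0 < s by rewrite sqrtr_gt0.
have sx : s ^+ 2 = x by rewrite sqr_sqrtr // ltW.
split => //; split => //.
by rewrite -{1}sx lnXn // mulr_natl.
Qed.

Lemma poly_pos {z : R} : 0 <= z ->
  0 <= 4 + 8 * z + 14 * z ^+ 2 + 40 * z ^+ 3 + 40 * z ^+ 4 + 16 * z ^+ 5 + 2 * z ^+ 6.
Proof.
move=> z0.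
have := exprn_ge0 2 z0; have := exprn_ge0 3 z0; have := exprn_ge0 4 z0;
have := exprn_ge0 5 z0; have := exprn_ge0 6 z0.
lra.
Qed.

Lemma key_lemma (n : nat) (x : R) : 0 < x ->
  x - 1 - ln x < n%:R - 2 * ln (n%:R : R) - 4 ->
  (x - 1) ^+ 2 <= (n%:R - 2) * (x - 1 - ln x).
Proof.
move=> x0 P.
have lx := ln_le_sub1 x0.
have n6 : (6 <= n)%N by apply: n_ge6; lra.
have N6 : (6%:R : R) <= n%:R by rewrite ler_nat.
set N := (n%:R : R) in P N6 *.
have [s0 [sx ls]] := sqrt_ln x0.
set s := Num.sqrt x in s0 sx ls.
have [y0 [ys ly]] := sqrt_ln s0.
set y := Num.sqrt s in y0 ys ly.
have lsb := ln_le_sub1 s0.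
have lyb := ln_le_sub1 y0.
set l := ln x in P lx ls *.
have [x1|x1] := lerP x 1.
  have s1 : s <= 1 by nra.
  have hu : (s - 1) ^+ 2 <= x - 1 - l by rewrite -sx; nra.
  have h4 : (x - 1) ^+ 2 <= 4 * (s - 1) ^+ 2.
    rewrite -sx.
    have -> : (s ^+ 2 - 1) ^+ 2 = (s - 1) ^+ 2 * (s + 1) ^+ 2 by ring.
    have : (s + 1) ^+ 2 <= 4 by nra.
    have : 0 <= (s - 1) ^+ 2 by rewrite sqr_ge0.
    nra.
  have hu0 : 0 <= x - 1 - l by lra.
  have : 0 <= (N - 6) * (x - 1 - l) by apply: mulr_ge0; lra.
  nra.
have s1 : 1 < s.
  rewrite ltNge; apply/negP => h; have : s ^+ 2 <= 1 by rewrite expr_le1 // ltW.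
  by rewrite sx; lra.
have y1 : 1 < y.
  rewrite ltNge; apply/negP => h; have : y ^+ 2 <= 1 by rewrite expr_le1 // ltW.
  by rewrite ys; lra.
have l0 : 0 < l by rewrite /l ln_gt0.
have xy : x = y ^+ 4 by rewrite -sx -ys -exprM.
have lm : l <= 4 * (y - 1) by lra.
have uy : (y - 1) ^+ 2 * (y ^+ 2 + 2 * y + 3) <= x - 1 - l.
  have -> : (y - 1) ^+ 2 * (y ^+ 2 + 2 * y + 3) = x - 1 - 4 * (y - 1) by rewrite xy; ring.
  lra.
set u := x - 1 - l in uy *.
have u0 : 0 < u.
  apply: lt_le_trans uy; apply: mulr_gt0; first by rewrite exprn_gt0 // subr_gt0.
  nra.
have hi : (x + 1) * l ^+ 2 <= (2 * x + 4) * u.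
  have hp : 16 * (x + 1) <= (2 * x + 4) * (y ^+ 2 + 2 * y + 3).
    have y10 : 0 <= y - 1 by lra.
    have hz := poly_pos y10; rewrite -subr_ge0.
    suff -> : (2 * x + 4) * (y ^+ 2 + 2 * y + 3) - 16 * (x + 1) =
      4 + 8 * (y - 1) + 14 * (y - 1) ^+ 2 + 40 * (y - 1) ^+ 3 + 40 * (y - 1) ^+ 4
      + 16 * (y - 1) ^+ 5 + 2 * (y - 1) ^+ 6 by [].
    rewrite xy; ring.
  have hm : (x + 1) * l ^+ 2 + (2 * x + 4) * l <=
            (x + 1) * (4 * (y - 1)) ^+ 2 + (2 * x + 4) * (4 * (y - 1)).
    have : 0 <= (4 * (y - 1) - l) * ((x + 1) * (4 * (y - 1) + l) + (2 * x + 4)).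
      apply: mulr_ge0; first by lra.
      have : 0 <= (x + 1) * (4 * (y - 1) + l) by apply: mulr_ge0; lra.
      lra.
    lra.
  have : (x + 1) * (4 * (y - 1)) ^+ 2 + (2 * x + 4) * (4 * (y - 1)) <=
         (2 * x + 4) * (x - 1).
    have -> : x - 1 = (y - 1) ^+ 2 * (y ^+ 2 + 2 * y + 3) + 4 * (y - 1) by rewrite xy; ring.
    have : 0 <= (y - 1) ^+ 2 by rewrite sqr_ge0.
    nra.
  rewrite /u; nra.
rewrite leNgt; apply/negP => H.
set q := (x - 1) ^+ 2 / u.
have qu : q * u = (x - 1) ^+ 2 by rewrite /q mulfVK // gt_eqF.
have hq1 : (q - (x - 1) - l) * u = l ^+ 2.
  have -> : (q - (x - 1) - l) * u = q * u - (x - 1 + l) * u by ring.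
  rewrite qu /u; ring.
set t := (x + 1)^-1.
have tx : t * (x + 1) = 1 by rewrite /t mulVf // gt_eqF //; lra.
have t0 : 0 < t by rewrite /t invr_gt0; lra.
have hq2 : q - (x - 1) - l <= 2 + 2 * t.
  have : (q - (x - 1) - l) * u <= (2 + 2 * t) * u.
    rewrite hq1.
    have e : t * (2 * x + 4) = 2 + 2 * t by lra.
    have -> : (2 + 2 * t) * u = t * ((2 * x + 4) * u) by rewrite mulrA e.
    have -> : l ^+ 2 = t * ((x + 1) * l ^+ 2) by rewrite mulrA tx mul1r.
    by rewrite ler_pM2l.
  by rewrite ler_pM2r.
have hq3 : 0 <= q - (x - 1) - l.
  have : 0 <= (q - (x - 1) - l) * u by rewrite hq1 sqr_ge0.
  by rewrite pmulr_lge0.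
set n0 := 2 + q.
have Nn0 : N <= n0.
  have : (N - 2) * u <= q * u by rewrite qu; lra.
  rewrite ler_pM2r //; rewrite /n0; lra.
have N2 : 2 <= N by lra.
have pm := @phi_mono N n0 N2 Nn0.
have n00 : 0 < n0 by rewrite /n0; lra.
have hln : l + 1 - x / n0 <= ln n0.
  have h := ln_ge_1subinv (divr_gt0 n00 x0).
  rewrite ln_div ?posrE // invf_div in h.
  rewrite -/l in h; lra.
set r := x / n0 in hln.
have rn : r * n0 = x by rewrite /r mulfVK // gt_eqF.
have hr : r <= x * t.
  have : r * (x + 1) <= x by rewrite -{2}rn; apply: ler_wpM2l; [rewrite /r divr_ge0 // ltW | rewrite /n0; lra].
  move=> h; have := ler_wpM2r (ltW t0) h; rewrite -mulrA (mulrC (x + 1)) tx mulr1; apply.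
have : u + 4 < n0 - 2 * ln n0 by rewrite /u; lra.
have : x * t + t = 1 by rewrite -tx; ring.
rewrite /u /n0; nra.
Qed.


Lemma reduced (n : nat) (x : 'I_n -> R) :
  (forall i, 0 < x i) -> 0 <= \sum_i ln (x i) ->
  (\sum_i x i ^+ 2) / n%:R <= n%:R - 2 * ln (n%:R : R) - 3 ->
  n%:R - 1 + (\sum_i x i ^+ 2) / n%:R <= \sum_i x i.
Proof.
move=> xpos lsum hyp.
case: n x xpos lsum hyp => [|n] x xpos lsum hyp.
  by rewrite !big_ord0 mul0r; lra.
set N := (n.+1%:R : R) in hyp *.
have N0 : 0 < N by rewrite ltr0n.
set S := \sum_i x i ^+ 2 in hyp *.
set d := S / N in hyp *.
have ux : forall i, 0 <= x i - 1 - ln (x i).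
  by move=> i; have := ln_le_sub1 (xpos i); lra.
have sumx : \sum_i x i = \sum_i (x i - 1 - ln (x i)) + \sum_i ln (x i) + N.
  rewrite -big_split /= (_ : N = \sum_(i < n.+1) 1); last first.
    by rewrite sumr_const card_ord.
  rewrite -big_split /=; apply: eq_bigr => i _; ring.
have [[j hj]|hB] := pselect (exists j, d - 1 <= x j - 1 - ln (x j)).
  have : x j - 1 - ln (x j) <= \sum_i (x i - 1 - ln (x i)).
    rewrite (bigD1 j) //= lerDl; apply: sumr_ge0 => i _; exact: ux.
  lra.
have hB' : forall j, x j - 1 - ln (x j) < N - 2 * ln N - 4.
  move=> j; have : ~ (d - 1 <= x j - 1 - ln (x j)) by move=> h; apply: hB; exists j.
  move/negP; rewrite -ltNge; lra.
have n6 : (6 <= n.+1)%N.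
  by apply: n_ge6; rewrite -/N; have := hB' ord0; have := ux ord0; lra.
have N6 : (6%:R : R) <= N by rewrite ler_nat.
have h1 : forall i, (N - 2) * ln (x i) <= N * x i - x i ^+ 2 - N + 1.
  move=> i; have := @key_lemma n.+1 (x i) (xpos i) (hB' i).
  rewrite -/N => k; nra.
have h2 : (N - 2) * \sum_i ln (x i) <= \sum_i (N * x i - x i ^+ 2 - N + 1).
  rewrite mulr_sumr; apply: ler_sum => i _; exact: h1.
have h3 : \sum_i (N * x i - x i ^+ 2 - N + 1) = N * \sum_i x i - S - N * N + N.
  rewrite big_split /= sumrB sumrB -mulr_sumr !sumr_const card_ord -/S -/N.
  rewrite mulr_natr; ring.
have h4 : 0 <= (N - 2) * \sum_i ln (x i) by apply: mulr_ge0; lra.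
have dN : d * N = S by rewrite /d mulfVK // gt_eqF.
rewrite -(ler_pM2r N0).
nra.
Qed.

End RealPart.
Lemma prod_map_enum {R : comNzRingType} {n} (lam : 'I_n -> R) (F : R -> {poly R}) :
  \prod_(i < n) F (lam i) = \prod_(p <- map lam (enum 'I_n)) F p.
Proof. by rewrite big_map big_enum. Qed.

Lemma horner_char_poly (R : comNzRingType) n (M : 'M[R]_n) t :
  (char_poly M).[t] = \det (t%:M - M).
Proof.
rewrite /char_poly -horner_evalE -det_map_mx; congr (\det _).
apply/matrixP => i j; rewrite !mxE /=.
by rewrite horner_evalE hornerD hornerN hornerMn hornerX hornerC.
Qed.

Lemma det_prod {R : realType} {n} {A : 'M[R]_n} {lam : 'I_n -> R} :
  char_poly A = \prod_(i < n) ('X - (lam i)%:P) -> \det A = \prod_(i < n) lam i.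
Proof.
move=> hA.
have := char_poly_det A; rewrite hA.
rewrite (prod_map_enum lam (fun p => 'X - p%:P)) coef0_prod_XsubC size_map size_enum_ord.
rewrite big_map big_enum /= => h.
by have := congr1 (fun z => (-1) ^+ n * z) h; rewrite !signrMK => ->.
Qed.

Lemma char_poly_sq {R : realType} {n} {A : 'M[R]_n} {lam : 'I_n -> R} :
  char_poly A = \prod_(i < n) ('X - (lam i)%:P) ->
  char_poly (A *m A) = \prod_(i < n) ('X - (lam i ^+ 2)%:P).
Proof.
move=> hA.
set P := char_poly (A *m A); set Q := \prod_(i < n) _.
have ev : forall t, 0 <= t -> P.[t] = Q.[t].
  move=> t t0; set s := Num.sqrt t.
  have st : s * s = t by rewrite -expr2 sqr_sqrtr.
  rewrite /P horner_char_poly.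
  have -> : t%:M - A *m A = (s%:M - A) *m (s%:M + A).
    rewrite mulmxDr !mulmxBl -scalar_mxM st scalar_mxC.
    by rewrite addrA subrK.
  rewrite det_mulmx -horner_char_poly.
  have -> : s%:M + A = (-1) *: ((- s)%:M - A).
    by rewrite scaleN1r opprB raddfN opprK addrC.
  rewrite detZ -horner_char_poly hA /Q. rewrite horner_prod. rewrite horner_prod. rewrite horner_prod.
  under eq_bigr => i _ do rewrite hornerXsubC.
  under [X in _ * (_ * X)]eq_bigr => i _ do rewrite hornerXsubC.
  under [in RHS]eq_bigr => i _ do rewrite hornerXsubC.
  have -> : (-1) ^+ n * \prod_(i < n) (- s - lam i) = \prod_(i < n) (s + lam i).
    transitivity (\prod_(i < n) ((-1) * (- s - lam i))).
      by rewrite big_split /= prodr_const card_ord.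
    by apply: eq_bigr => i _; ring.
  rewrite -big_split /=; apply: eq_bigr => i _; rewrite -st; ring.
apply/eqP; rewrite -subr_eq0; apply/eqP.
apply: (@roots_geq_poly_eq0 _ _ [seq k%:R | k <- iota 0 (size (P - Q))]).
- apply/allP => r /mapP [k _ ->]; rewrite /root hornerD hornerN ev ?subrr // ler0n.
- rewrite map_inj_uniq ?iota_uniq // => a b /eqP; rewrite eqr_nat => /eqP //.
- by rewrite size_map size_iota.
Qed.

Lemma trace_sq {R : realType} {n} {A : 'M[R]_n} {lam : 'I_n -> R} :
  char_poly A = \prod_(i < n) ('X - (lam i)%:P) ->
  \tr (A *m A) = \sum_(i < n) lam i ^+ 2.
Proof.
move=> hA; case: n A lam hA => [|n] A lam hA.
  by rewrite /mxtrace !big_ord0.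
have := char_poly_trace (A *m A) (ltn0Sn n).
rewrite (char_poly_sq hA) (prod_map_enum (fun i => lam i ^+ 2) (fun p => 'X - p%:P)).
have := @coefPn_prod_XsubC R [seq lam i ^+ 2 | i <- enum 'I_n.+1].
rewrite size_map size_enum_ord => -> // /eqP; rewrite eqr_opp => /eqP <-.
by rewrite big_map big_enum.
Qed.

Lemma adj_int (R : realType) n (e : rel 'I_n) : adjmx R e = map_mx intr (adjmx int e).
Proof. by apply/matrixP => i j; rewrite !mxE; case: (e i j). Qed.

Lemma det_ge1 {R : realType} {n} {e : rel 'I_n} :
  \det (adjmx R e) != 0 -> 1 <= `|\det (adjmx R e)|.
Proof.
rewrite adj_int det_map_mx => h; apply: norm_intr_ge1 => //; exact: intr_int.
Qed.

Lemma sum_edges n (e : rel 'I_n) : symmetric e -> irreflexive e ->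
  (\sum_i \sum_j (e i j : nat) = 2 * nedges e)%N.
Proof.
move=> sym irr; rewrite pair_big /=.
have spl : forall p : 'I_n * 'I_n, (e p.1 p.2 : nat) =
    ((e p.1 p.2 && (p.1 < p.2)%N) + (e p.1 p.2 && (p.2 < p.1)%N))%N.
  move=> [i j] /=; case: (ltngtP i j) => h; rewrite ?andbT ?andbF ?addn0 //.
  have -> : i = j by apply: ord_inj.
  by rewrite irr.
rewrite (eq_bigr _ (fun p _ => spl p)) big_split /=.
rewrite [X in (_ + X)%N](reindex_inj (h := fun p : 'I_n * 'I_n => (p.2, p.1))) /=; last first.
  by move=> [a b] [c d] /= [-> ->].
have -> : (\sum_(j : 'I_n * 'I_n) (e j.2 j.1 && (j.1 < j.2)%N) =
          \sum_(j : 'I_n * 'I_n) (e j.1 j.2 && (j.1 < j.2)%N))%N.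
  by apply: eq_bigr => p _; rewrite sym.
rewrite addnn -mul2n /nedges -sum1_card big_mkcond /=; congr (2 * _)%N.
rewrite [RHS]big_mkcond; apply: eq_bigr => p _; rewrite inE; by case: (_ && _).
Qed.

Lemma tr_adj (R : realType) n (e : rel 'I_n) : simple_graph e ->
  \tr (adjmx R e *m adjmx R e) = (2 * nedges e)%:R.
Proof.
case=> sym irr; rewrite -sum_edges // natr_sum /mxtrace.
apply: eq_bigr => i _; rewrite !mxE natr_sum; apply: eq_bigr => j _.
by rewrite !mxE (sym j i); case: (e i j); rewrite ?mulr1 ?mulr0.
Qed.

Lemma ln_prod (R : realType) n (f : 'I_n -> R) : (forall i, 0 < f i) ->
  ln (\prod_i f i) = \sum_i ln (f i).
Proof.
move=> fpos.
suff : 0 < \prod_i f i /\ ln (\prod_i f i) = \sum_i ln (f i) by case.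
apply: (big_rec2 (fun a b => 0 < a /\ ln a = b)).
  by split; [exact: ltr01 | exact: ln1].
move=> i a b _ [a0 <-]; split; first exact: mulr_gt0.
by rewrite lnM ?posrE.
Qed.

Theorem theorem3p3 (R : realType) (n : nat) (e : rel 'I_n) :
  simple_graph e ->
  \det (adjmx R e) != 0 ->
  avg_deg R e <= n%:R - 2 * ln (n%:R : R) - 3 ->
  ~ graph_iso e P4 -> ~ graph_iso e paw ->
  forall lam : 'I_n -> R, is_spectrum (adjmx R e) lam ->
    (n%:R - 1) + avg_deg R e <= energy_of lam.
Proof.
move=> sg hdet hdeg _ _ lam hspec.
have hdp := det_prod hspec.
have ge1 := det_ge1 hdet.
have hpos : forall i, 0 < `|lam i|.
  move=> i; rewrite normr_gt0; apply/negP => /eqP h0.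
  by move: hdet; rewrite hdp (bigD1 i) //= h0 mul0r eqxx.
have lsum : 0 <= \sum_i ln `|lam i|.
  by rewrite -ln_prod // -normr_prod -hdp; apply: ln_ge0.
have sq : \sum_i `|lam i| ^+ 2 = (2 * nedges e)%:R.
  rewrite -(@tr_adj R n e sg) (trace_sq hspec); apply: eq_bigr => i _.
  by rewrite real_normK ?num_real.
have := @reduced R n (fun i => `|lam i|) hpos lsum.
rewrite sq /avg_deg /energy_of; apply.
exact: hdeg.
Qed.
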